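(* Let $(S,\mathcal{E}^Q)$ be a quantitative evidence frame with $\mathcal{E}^Q=\{(E_1,p_1),\dots,(E_k,p_k)\}$. Let $i:2^{\mathcal{E}}\to\tau_{\mathcal{E}}$ be given by $i(\emptyset)=S$ and $i(\mathbf{E})=\bigcap\mathbf{E}$ for $\mathbf{E}\neq\emptyset$, and let $\mathcal{J}_{DS}=\tau_{\mathcal{E}}\setminus\{\emptyset\}$. For $j=1,\dots,k$ let $m_j$ be the basic probability assignment on $S$ with $m_j(E_j)=p_j$, $m_j(S)=1-p_j$ (and $0$ elsewhere), let $m=m_1\oplus\cdots\oplus m_k$ be obtained by Dempster's rule of combination, and let $\mathrm{Bel}(P)=\sum_{A\subseteq P}m(A)$. Then $\mathrm{Bel}_{\mathcal{J}_{DS}}(i,P)=\mathrm{Bel}(P)$ for every $P\subseteq S$.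
   Context: A quantitative evidence frame is a pair $(S,\mathcal{E}^Q)$ where $S$ is a finite nonempty set and $\mathcal{E}^Q=\{(E_1,p_1),\dots,(E_k,p_k)\}$ with $E_1,\dots,E_k$ distinct, $p_j\in(0,1)$, and $\mathcal{E}=\{E_1,\dots,E_k\}$ a nonempty family of subsets of $S$ with $\emptyset\notin\mathcal{E}$, $S\notin\mathcal{E}$. $\tau_{\mathcal{E}}$ is the topology on $S$ generated by $\mathcal{E}$: $\emptyset$, $S$, all finite intersections of members of $\mathcal{E}$, and all unions of such. Define $\delta(\mathbf{E})=\prod_{E_j\in\mathbf{E}}p_j\prod_{E_j\notin\mathbf{E}}(1-p_j)$ for $\mathbf{E}\subseteq\mathcal{E}$; for $f:2^{\mathcal{E}}\to\tau_{\mathcal{E}}$, $\delta_\tau(f,T)=\sum_{\mathbf{E}\subseteq\mathcal{E}:\,f(\mathbf{E})=T}\delta(\mathbf{E})$ if $T\in\tau_{\mathcal{E}}$ and $0$ otherwise; for $\mathcal{J}\subseteq\tau_{\mathcal{E}}$, $\delta_{\mathcal{J}}(f,A)=\delta_\tau(f,A)/\sum_{T\in\mathcal{J}}\delta_\tau(f,T)$ if $A\in\mathcal{J}$ and $0$ otherwise; $\mathrm{Bel}_{\mathcal{J}}(f,P)=\sum_{A\subseteq P}\delta_{\mathcal{J}}(f,A)$. A basic probability assignment on $S$ is $m:2^S\to[0,1]$ with $m(\emptyset)=0$ and $\sum_{A\subseteq S}m(A)=1$. Dempster's rule: for basic probability assignments $m_1,m_2$ with $K=1-\sum_{A\cap B=\emptyset}m_1(A)m_2(B)>0$,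 $(m_1\oplus m_2)(\emptyset)=0$ and $(m_1\oplus m_2)(C)=\frac1K\sum_{A\cap B=C}m_1(A)m_2(B)$ for nonempty $C\subseteq S$; $m_1\oplus\cdots\oplus m_k$ is obtained by applying this rule successively. *)

(* Defs.v *)
From HB Require Import structures.
From mathcomp Require Import all_boot all_order all_algebra.
Set Implicit Arguments. Unset Strict Implicit. Unset Printing Implicit Defensive.
Import Order.TTheory GRing.Theory Num.Theory.
Local Open Scope ring_scope.

Section QEF.
Variables (R : realFieldType) (S : finType) (k : nat).
Variables (E : 'I_k -> {set S}) (p : 'I_k -> R).

Definition qevidence_frame : Prop :=
  [/\ (0 < k)%N, injective E,
      forall j, 0 < p j < 1,
      forall j, E j != set0 &
      forall j, E j != setT].

Definition tauE (T : {set S}) : bool :=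
  (T == setT) ||
  [exists F : {set {set 'I_k}},
     (set0 \notin F) && (T == \bigcup_(J in F) \bigcap_(j in J) E j)].

(* Subsets of the evidence family are represented by index sets
   (E is injective). *)
Definition delta (J : {set 'I_k}) : R :=
  (\prod_(j in J) p j) * \prod_(j in ~: J) (1 - p j).

Definition delta_tau (f : {set 'I_k} -> {set S}) (T : {set S}) : R :=
  if tauE T then \sum_(J : {set 'I_k} | f J == T) delta J else 0.

Definition delta_J (JJ : {set {set S}}) (f : {set 'I_k} -> {set S})
    (A : {set S}) : R :=
  if A \in JJ then delta_tau f A / \sum_(T in JJ) delta_tau f T else 0.

Definition Bel_J (JJ : {set {set S}}) (f : {set 'I_k} -> {set S})
    (P : {set S}) : R :=
  \sum_(A : {set S} | A \subset P) delta_J JJ f A.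

Definition i_map (J : {set 'I_k}) : {set S} :=
  if J == set0 then setT else \bigcap_(j in J) E j.

Definition J_DS : {set {set S}} := [set T | tauE T & T != set0].

Definition m_simple (j : 'I_k) (A : {set S}) : R :=
  if A == E j then p j else if A == setT then 1 - p j else 0.

End QEF.

Section Dempster.
Variables (R : realFieldType) (S : finType).

Definition is_bpa (m : {set S} -> R) : Prop :=
  [/\ forall A, 0 <= m A <= 1, m set0 = 0 & \sum_A m A = 1].

Definition conflict_K (m1 m2 : {set S} -> R) : R :=
  1 - \sum_(A : {set S}) \sum_(B : {set S} | A :&: B == set0) m1 A * m2 B.

Definition dempster (m1 m2 : {set S} -> R) (C : {set S}) : R :=
  if C == set0 then 0
  else (conflict_K m1 m2)^-1 *
       \sum_(A : {set S}) \sum_(B : {set S} | A :&: B == C) m1 A * m2 B.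

Definition dempster_seq (ms : seq ({set S} -> R)) : {set S} -> R :=
  match ms with
  | [::] => fun A => if A == setT then 1 else 0
  | m :: rest => foldl dempster m rest
  end.

Definition Bel (m : {set S} -> R) (P : {set S}) : R :=
  \sum_(A : {set S} | A \subset P) m A.
End Dempster.

(* Main.v *)
Require Import Defs.
From HB Require Import structures.
From mathcomp Require Import all_boot all_order all_algebra.
From mathcomp Require Import ring lra.
From Stdlib Require Import FunctionalExtensionality.
Set Implicit Arguments. Unset Strict Implicit. Unset Printing Implicit Defensive.
Import Order.TTheory GRing.Theory Num.Theory.
Local Open Scope ring_scope.

Lemma split_sub (R : realFieldType) k (D : {set 'I_k}) j (F : {set 'I_k} -> R) :
  j \notin D ->
  \sum_(J : {set 'I_k} | J \subset j |: D) F J = \sum_(J : {set 'I_k} | J \subset D) (F J + F (j |: J)).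
Proof.
move=> jD.
rewrite (bigID (fun J : {set 'I_k} => j \in J)) /= addrC big_split /=.
congr (_ + _).
  apply: eq_bigl => J.
  by rewrite -(setU1K jD) subsetD1 setU1K.
rewrite (reindex_onto (fun J => j |: J) (fun J => J :\ j)) /=; last first.
  by move=> J /andP[_ jJ]; rewrite setD1K.
apply: eq_bigl => J; apply/idP/idP.
  case/andP=> /andP[sub _] /eqP eJ.
  have jJ : j \notin J by rewrite -eJ setD11.
  apply/subsetP => x xJ.
  have : x \in j |: D by apply: (subsetP sub); rewrite setU1r.
  rewrite in_setU1; case/orP => // /eqP xj.
  by rewrite -xj xJ in jJ.
move=> JD.
have jJ : j \notin J by apply/negP => /(subsetP JD); rewrite (negbTE jD).
rewrite setU11 andbT setU1K // eqxx andbT.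
by apply: setUS.
Qed.
Definition wD (R : realFieldType) k (p : 'I_k -> R) (D J : {set 'I_k}) : R :=
  (\prod_(j in J) p j) * \prod_(j in D :\: J) (1 - p j).

Lemma wD_out (R : realFieldType) k (p : 'I_k -> R) (D J : {set 'I_k}) j :
  j \notin D -> J \subset D -> wD p (j |: D) J = (1 - p j) * wD p D J.
Proof.
move=> jD JD.
have jJ : j \notin J by apply/negP => /(subsetP JD); rewrite (negbTE jD).
rewrite /wD; have -> : (j |: D) :\: J = j |: (D :\: J).
  apply/setP => x; rewrite !inE; case: (eqVneq x j) => [->|] //=.
  by rewrite (negbTE jJ).
rewrite big_setU1 /=; last by rewrite inE (negbTE jD) andbF.
ring.
Qed.

Lemma wD_in (R : realFieldType) k (p : 'I_k -> R) (D J : {set 'I_k}) j :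
  j \notin D -> J \subset D -> wD p (j |: D) (j |: J) = p j * wD p D J.
Proof.
move=> jD JD.
have jJ : j \notin J by apply/negP => /(subsetP JD); rewrite (negbTE jD).
rewrite /wD; have -> : (j |: D) :\: (j |: J) = D :\: J.
  apply/setP => x; rewrite !inE; case: (eqVneq x j) => [->|] //=.
  by rewrite (negbTE jD) andbF.
rewrite big_setU1 //=.
ring.
Qed.

Lemma imap_U1 (S : finType) k (E : 'I_k -> {set S}) (J : {set 'I_k}) j :
  j \notin J -> i_map E (j |: J) = E j :&: i_map E J.
Proof.
move=> jJ; rewrite /i_map.
have -> : (j |: J == set0) = false.
  by apply/negbTE/set0Pn; exists j; rewrite setU11.
case: (eqVneq J set0) => [->|J0].
  by rewrite setU0 big_set1 setIT.
by rewrite big_setU1.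
Qed.

Lemma tauE_imap (S : finType) k (E : 'I_k -> {set S}) (J : {set 'I_k}) :
  tauE E (i_map E J).
Proof.
rewrite /tauE /i_map; case: (eqVneq J set0) => [_|J0]; first by rewrite eqxx.
apply/orP; right; apply/existsP; exists [set J].
by rewrite inE eq_sym J0 /= big_set1.
Qed.

Lemma wD_ge0 (R : realFieldType) k (p : 'I_k -> R) (D J : {set 'I_k}) :
  (forall j, 0 < p j < 1) -> 0 <= wD p D J.
Proof.
move=> hp; rewrite /wD; apply: mulr_ge0; apply: prodr_ge0 => j _;
  have := hp j; case/andP => h1 h2; lra.
Qed.

Lemma wD_gt0 (R : realFieldType) k (p : 'I_k -> R) (D J : {set 'I_k}) :
  (forall j, 0 < p j < 1) -> 0 < wD p D J.
Proof.
move=> hp; rewrite /wD; apply: mulr_gt0; apply: prodr_gt0 => j _;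
  have := hp j; case/andP => h1 h2; lra.
Qed.

Definition qD (R : realFieldType) (S : finType) k (E : 'I_k -> {set S}) (p : 'I_k -> R)
  (D : {set 'I_k}) (C : {set S}) : R :=
  \sum_(J : {set 'I_k} | J \subset D) (i_map E J == C)%:R * wD p D J.
Definition ZD (R : realFieldType) (S : finType) k (E : 'I_k -> {set S}) (p : 'I_k -> R)
  (D : {set 'I_k}) : R :=
  \sum_(J : {set 'I_k} | J \subset D) (i_map E J != set0)%:R * wD p D J.
Definition mD (R : realFieldType) (S : finType) k (E : 'I_k -> {set S}) (p : 'I_k -> R)
  (D : {set 'I_k}) (C : {set S}) : R :=
  (C != set0)%:R * qD E p D C / ZD E p D.

Lemma ZD_gt0 (R : realFieldType) (S : finType) k (E : 'I_k -> {set S}) (p : 'I_k -> R)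
  (D : {set 'I_k}) :
  (forall j, 0 < p j < 1) -> (setT : {set S}) != set0 -> 0 < ZD E p D.
Proof.
move=> hp hS; rewrite /ZD (bigD1 set0) ?sub0set //=.
have h1 : 0 < (i_map E set0 != set0)%:R * wD p D set0.
  by rewrite /i_map eqxx hS mul1r wD_gt0.
have h2 : 0 <= \sum_(i : {set 'I_k} | (i \subset D) && (i != set0))
                 (i_map E i != set0)%:R * wD p D i.
  by apply: sumr_ge0 => J _; apply: mulr_ge0; [exact: ler0n | exact: wD_ge0].
lra.
Qed.

Lemma sum_mD_g (R : realFieldType) (S : finType) k (E : 'I_k -> {set S}) (p : 'I_k -> R)
  (D : {set 'I_k}) (g : {set S} -> R) :
  \sum_(A : {set S}) mD E p D A * g A =
  (ZD E p D)^-1 * \sum_(J : {set 'I_k} | J \subset D)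
       ((i_map E J != set0)%:R * g (i_map E J)) * wD p D J.
Proof.
have e : forall A, mD E p D A * g A =
   (ZD E p D)^-1 * ((A != set0)%:R * g A * qD E p D A).
  by move=> A; rewrite /mD; ring.
rewrite (eq_bigr _ (fun A _ => e A)) -mulr_sumr; congr (_ * _).
rewrite /qD; under eq_bigr => A _ do rewrite mulr_sumr.
rewrite exchange_big /=; apply: eq_bigr => J _.
rewrite (bigD1 (i_map E J)) //= eqxx big1 ?addr0; first by rewrite mul1r.
by move=> A /negbTE; rewrite eq_sym => ->; rewrite mul0r mulr0.
Qed.

Lemma inner_sum (R : realFieldType) (S : finType) k (E : 'I_k -> {set S}) (p : 'I_k -> R)
  (f : {set S} -> R) (A C : {set S}) j :
  E j != setT ->
  \sum_(B : {set S} | A :&: B == C) f A * m_simple E p j B =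
  f A * (p j * (A :&: E j == C)%:R + (1 - p j) * (A == C)%:R).
Proof.
move=> ET; rewrite -mulr_sumr; congr (_ * _).
rewrite big_mkcond (bigD1 (E j)) //= (bigD1 setT) /=; last by rewrite eq_sym.
rewrite big1 ?addr0; last first.
  by move=> B /andP[/negbTE h1 /negbTE h2]; rewrite /m_simple h1 h2; case: ifP.
have ET' : ([set: S] == E j) = false by rewrite eq_sym; exact: negbTE.
rewrite /m_simple eqxx ET' eqxx setIT.
by case: ifP; case: ifP => _ _; rewrite /= ?mulr1 ?mulr0 ?addr0 ?add0r.
Qed.

Lemma step (R : realFieldType) (S : finType) k (E : 'I_k -> {set S}) (p : 'I_k -> R)
  (D : {set 'I_k}) j :
  (forall j, 0 < p j < 1) -> (setT : {set S}) != set0 -> E j != setT ->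
  j \notin D ->
  forall C, dempster (mD E p D) (m_simple E p j) C = mD E p (j |: D) C.
Proof.
move=> hp hS ET jD C.
have Z0 := ZD_gt0 E D hp hS.
have Z1 := ZD_gt0 E (j |: D) hp hS.
rewrite /dempster /conflict_K.
case: (eqVneq C set0) => [->|C0]; first by rewrite /mD eqxx !mul0r.
under eq_bigr => A _ do rewrite inner_sum //.
under [X in _ * X]eq_bigr => A _ do rewrite inner_sum //.
rewrite !sum_mD_g.
set Z := ZD E p D.
set N := \sum_(J : {set 'I_k} | J \subset D)
   ((i_map E J == C)%:R * ((1 - p j) * wD p D J) +
    ((E j :&: i_map E J) == C)%:R * (p j * wD p D J)).
set Den := \sum_(J : {set 'I_k} | J \subset D)
   ((i_map E J != set0)%:R * ((1 - p j) * wD p D J) +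
    ((E j :&: i_map E J) != set0)%:R * (p j * wD p D J)).
have eN : qD E p (j |: D) C = N.
  rewrite /qD split_sub //; apply: eq_bigr => J JD.
  have jJ : j \notin J by apply/negP => /(subsetP JD); rewrite (negbTE jD).
  by rewrite wD_out // wD_in // imap_U1.
have eDen : ZD E p (j |: D) = Den.
  rewrite /ZD split_sub //; apply: eq_bigr => J JD.
  have jJ : j \notin J by apply/negP => /(subsetP JD); rewrite (negbTE jD).
  by rewrite wD_out // wD_in // imap_U1.
rewrite /mD C0 eN eDen.
rewrite eDen in Z1.
have -> : \sum_(J : {set 'I_k} | J \subset D)
      (i_map E J != set0)%:R *
      (p j * (i_map E J :&: E j == C)%:R + (1 - p j) * (i_map E J == C)%:R) *
      wD p D J = N.
  apply: eq_bigr => J _; rewrite setIC.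
  case: (eqVneq (i_map E J) set0) => [->|_]; last by rewrite /=; ring.
  by rewrite setI0 !(eq_sym set0) (negbTE C0) /=; ring.
have -> : \sum_(J : {set 'I_k} | J \subset D)
      (i_map E J != set0)%:R *
      (p j * (i_map E J :&: E j == set0)%:R + (1 - p j) * (i_map E J == set0)%:R) *
      wD p D J = Z - Den.
  rewrite /Z /ZD -sumrB; apply: eq_bigr => J _; rewrite setIC.
  case: (eqVneq (i_map E J) set0) => [->|_] /=; first by rewrite setI0 eqxx /=; ring.
  by case: (eqVneq (E j :&: i_map E J) set0) => _ /=; ring.
rewrite mul1r; field.
by apply/andP; split; rewrite gt_eqF.
Qed.

Lemma wD_T (R : realFieldType) k (p : 'I_k -> R) (J : {set 'I_k}) :
  wD p setT J = delta p J.
Proof. by rewrite /wD /delta setTD. Qed.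

Lemma qT (R : realFieldType) (S : finType) k (E : 'I_k -> {set S}) (p : 'I_k -> R) A :
  qD E p setT A = \sum_(J : {set 'I_k} | i_map E J == A) delta p J.
Proof.
rewrite /qD; under eq_bigl => J do rewrite subsetT.
rewrite [RHS]big_mkcond; apply: eq_bigr => J _; rewrite wD_T.
by case: eqP => _; rewrite ?mul1r ?mul0r.
Qed.

Lemma ZT (R : realFieldType) (S : finType) k (E : 'I_k -> {set S}) (p : 'I_k -> R) :
  ZD E p setT = \sum_(J : {set 'I_k} | i_map E J != set0) delta p J.
Proof.
rewrite /ZD; under eq_bigl => J do rewrite subsetT.
rewrite [RHS]big_mkcond; apply: eq_bigr => J _; rewrite wD_T.
by case: eqP => _; rewrite ?mul1r ?mul0r.
Qed.

Lemma DenT (R : realFieldType) (S : finType) k (E : 'I_k -> {set S}) (p : 'I_k -> R) :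
  \sum_(T in J_DS E) delta_tau E p (i_map E) T = ZD E p setT.
Proof.
rewrite ZT (partition_big (i_map E) (mem (J_DS E))) /=; last first.
  by move=> J hJ; rewrite inE tauE_imap hJ.
apply: eq_bigr => T; rewrite inE => /andP[hT T0].
rewrite /delta_tau hT; apply: eq_bigl => J.
by case: (eqVneq (i_map E J) T) => [->|]; rewrite ?T0 ?andbF.
Qed.

Lemma final_eq (R : realFieldType) (S : finType) k (E : 'I_k -> {set S}) (p : 'I_k -> R) P :
  Bel_J E p (J_DS E) (i_map E) P = Bel (mD E p setT) P.
Proof.
rewrite /Bel_J /Bel; apply: eq_bigr => A _.
rewrite /delta_J DenT /mD.
case: ifP => hA.
  move: (hA); rewrite inE => /andP[hT A0].
  by rewrite /delta_tau hT qT A0 mul1r.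
case: (eqVneq A set0) => [->|A0]; first by rewrite /= !mul0r.
have hT : tauE E A = false by move: hA; rewrite inE A0 andbT.
rewrite qT big_pred0 ?mulr0 ?mul0r // => J.
by apply/negbTE; apply/eqP => eJ; move: (tauE_imap E J); rewrite eJ hT.
Qed.

Lemma base (R : realFieldType) (S : finType) k (E : 'I_k -> {set S}) (p : 'I_k -> R) j C :
  E j != set0 -> E j != setT ->
  m_simple E p j C = mD E p [set j] C.
Proof.
move=> E0 ET.
have e1 : [set j] = j |: set0 by rewrite setU0.
have j0 : j \notin (set0 : {set 'I_k}) by rewrite inE.
have hs : forall J : {set 'I_k}, (J \subset set0) = (J == set0).
  by move=> J; rewrite subset0.
rewrite /mD /qD /ZD e1 !split_sub //.
rewrite !(big_pred1 set0) // wD_out ?sub0set // wD_in ?sub0set // imap_U1 ?inE //.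
have w0 : wD p set0 set0 = 1 by rewrite /wD setD0 !big_set0 mulr1.
rewrite w0 /i_map eqxx setIT.
have hT : ([set: S] != set0).
  by apply/set0Pn; case/set0Pn: E0 => x _; exists x; rewrite inE.
rewrite hT E0 /= !mulr1 !mul1r addrC subrK divr1 /m_simple.
case: (eqVneq C (E j)) => [->|CE].
  by rewrite E0 eq_sym (negbTE ET) /=; ring.
rewrite mul0r add0r.
case: (eqVneq C setT) => [->|CT]; first by rewrite hT /=; ring.
by rewrite mul0r mulr0.
Qed.

Lemma fold_mD (R : realFieldType) (S : finType) k (E : 'I_k -> {set S}) (p : 'I_k -> R) :
  (forall j, 0 < p j < 1) -> (setT : {set S}) != set0 -> (forall j, E j != setT) ->
  forall (s : seq 'I_k) (D : {set 'I_k}), uniq s -> all (fun x => x \notin D) s ->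
  foldl (@dempster R S) (mD E p D) [seq m_simple E p j | j <- s] =
  mD E p (D :|: [set x in s]).
Proof.
move=> hp hS ET; elim=> [|x s IH] D /=.
  by move=> _ _; congr mD; apply/setP => y; rewrite !inE orbF.
case/andP=> xs us /andP[xD aD].
have -> : dempster (mD E p D) (m_simple E p x) = mD E p (x |: D).
  by apply: functional_extensionality => C; apply: step.
rewrite IH //.
  congr mD; apply/setP => y; rewrite !inE; case: (y == x); rewrite ?orbT //.
apply/allP => y ys; rewrite in_setU1 negb_or (allP aD y ys) andbT.
by apply/eqP => eyx; rewrite -eyx ys in xs.
Qed.

Theorem proposition5 (R : realFieldType) (S : finType) (k : nat)
  (E : 'I_k -> {set S}) (p : 'I_k -> R) :
  qevidence_frame E p ->
  forall P : {set S},
    Bel_J E p (J_DS E) (i_map E) P =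
    Bel (dempster_seq [seq m_simple E p j | j <- enum 'I_k]) P.
Proof.
case=> k0 _ hp E0 ET P.
rewrite final_eq.
have hS : (setT : {set S}) != set0.
  case: k k0 E p hp E0 ET {P} => // k' _ E p hp E0 ET.
  by apply/set0Pn; case/set0Pn: (E0 ord0) => x _; exists x; rewrite inE.
have ue := enum_uniq 'I_k.
case e: (enum 'I_k) ue => [|x0 s] ue.
  have := size_enum_ord k; rewrite e /= => hk; by rewrite -hk in k0.
rewrite /=.
have -> : m_simple E p x0 = mD E p (set0 :|: [set x0]).
  by apply: functional_extensionality => C; rewrite set0U; apply: base.
rewrite fold_mD //.
- congr (Bel (mD E p _) P); apply/setP => y; rewrite !inE.
  have : y \in enum 'I_k by rewrite mem_enum.
  by rewrite e inE.
- by case/andP: ue.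
apply/allP => y ys; rewrite !inE; apply/eqP => eyx.
by case/andP: ue; rewrite -eyx ys.
Qed.
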